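(* Let $\{Q_\theta,\ \theta\in I\}$ be a natural exponential family as in the context and let $\overline\Theta$ be a class of functions from a set ${\mathscr W}$ to $I$ which is VC-subgraph with dimension not larger than $V\ge1$. Then the class of functions $\{(w,y)\mapsto q_{\theta(w)}(y):\ \theta\in\overline\Theta\}$ on ${\mathscr W}\times\mathscr Y$ is VC-subgraph with dimension not larger than $9.41V$.
   Context: $\nu$ is a $\sigma$-finite measure on $(\mathscr Y,\mathcal Y)$, $S:\mathscr Y\to\mathbb R$ measurable and not $\nu$-a.e. constant, $I$ an interval with nonempty interior on which $A(\theta)=\log\int e^{\theta S(y)}d\nu(y)$ is finite, and $q_\theta(y)=e^{S(y)\theta-A(\theta)}$. A class of real functions on a set $E$ is VC-subgraph with dimension not larger than $V$ if its subgraphs $\{(x,t)\in E\times\mathbb R: f(x)>t\}$ shatter no subset of $E\times\mathbb R$ of cardinality larger than $V$. *)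

(* Defs.v *)
From Stdlib Require List.
From HB Require Import structures.
From mathcomp Require Import all_boot all_order all_algebra.
From mathcomp Require Import all_classical all_reals all_analysis.
Set Implicit Arguments. Unset Strict Implicit. Unset Printing Implicit Defensive.
Import Order.TTheory GRing.Theory Num.Theory.
Local Open Scope classical_set_scope.
Local Open Scope ring_scope.

Definition shatters (T : Type) (C : set (set T)) (P : list T) : Prop :=
  forall B : set T, exists c : set T, C c /\
    (forall x, List.In x P -> (c x <-> B x)).

Definition subgraph (R : realType) (E : Type) (f : E -> R) : set (E * R) :=
  [set p | p.2 < f p.1].

Definition VC_subgraph_le (R : realType) (E : Type) (F : set (E -> R))
    (V : R) : Prop :=
  forall P : list (E * R), List.NoDup P -> V < (List.length P)%:R ->
    ~ shatters [set subgraph f | f in F] P.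

Definition log_partition (R : realType) d (Y : measurableType d)
    (nu : {measure set Y -> \bar R}) (S : Y -> R) (theta : R) : R :=
  ln (fine (\int[nu]_y ((expR (theta * S y))%:E))).

Definition qdens (R : realType) d (Y : measurableType d)
    (nu : {measure set Y -> \bar R}) (S : Y -> R) (theta : R) (y : Y) : R :=
  expR (S y * theta - log_partition nu S theta).

(* Main.v *)
Require Import Defs.
From HB Require Import structures.
From mathcomp Require Import all_boot all_order all_algebra.
From mathcomp Require Import all_classical all_reals all_analysis.
From Stdlib Require ZArith.
From mathcomp Require Import zify.
From mathcomp Require Import ring lra.
From mathcomp Require Import measurable_realfun.
Import Order.TTheory GRing.Theory Num.Theory.
Local Open Scope classical_set_scope.
Local Open Scope ring_scope.
Import numFieldNormedType.Exports.
Set Implicit Arguments. Unset Strict Implicit. Unset Printing Implicit Defensive.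

Section CombArith.
Local Close Scope classical_set_scope.
Local Close Scope ring_scope.
Local Open Scope nat_scope.
Section Pajor.
Variable T : finType.

Definition shat (F : {set {set T}}) (K : {set T}) : bool :=
  [forall B : {set T}, (B \subset K) ==> [exists A in F, A :&: K == B]].

Lemma shatP (F : {set {set T}}) (K : {set T}) : reflect (forall B : {set T}, B \subset K -> exists2 A, A \in F & A :&: K = B) (shat F K).
Proof.
apply: (iffP forallP) => [h B sB|h B]; last first.
  apply/implyP => sB; have [A AF e] := h B sB; apply/existsP; exists A; by rewrite AF e eqxx.
move/implyP: (h B) => /(_ sB) /existsP [A /andP [AF /eqP e]]; by exists A.
Qed.

Lemma pajor0 (F : {set {set T}}) : {in F, forall A : {set T}, A \subset finset.set0} ->
  #|F| <= #|[set K : {set T} | (K \subset finset.set0) && shat F K]|.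
Proof.
move=> hF; have [->|[A0 A0F]] := set_0Vmem F; first by rewrite cards0.
have sF : F \subset [set finset.set0].
  apply/fintype.subsetP=> A AF; rewrite inE; apply/eqP; apply/setP=> y.
  by rewrite inE; apply/negP=> yA; have := fintype.subsetP (hF A AF) y yA; rewrite inE.
apply: (leq_trans (subset_leq_card sF)); rewrite cards1 card_gt0; apply/set0Pn.
exists finset.set0; rewrite inE finset.sub0set /=; apply/shatP => B sB; exists A0 => //.
by rewrite finset.setI0; apply/esym/eqP; rewrite -finset.subset0.
Qed.

Lemma pajor n (G : {set T}) (F : {set {set T}}) : #|G| <= n ->
  {in F, forall A : {set T}, A \subset G} ->
  #|F| <= #|[set K : {set T} | (K \subset G) && shat F K]|.
Proof.
elim: n G F => [|n IH] G F hG hF.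
  by move: hG; rewrite leqn0 => /eqP/cards0_eq eG; subst G; apply: pajor0.
have [eG|[x xG]] := set_0Vmem G; first by subst G; apply: pajor0.
set G' := G :\ x.
have hG' : #|G'| <= n by move: hG; rewrite (cardsD1 x G) xG.
set F1 := [set A :\ x | A in F].
set F2 := [set A in F | (x \notin A) && (x |: A \in F)].
have sF1 : {in F1, forall A : {set T}, A \subset G'}.
  move=> A /imsetP [B BF ->]; exact: finset.setSD (hF B BF).
have sF2 : {in F2, forall A : {set T}, A \subset G'}.
  move=> A; rewrite inE => /andP [AF /andP [xA _]].
  by apply/fintype.subsetP=> y yA; rewrite !inE (fintype.subsetP (hF A AF) y yA) andbT; apply/eqP=> e; subst y; rewrite yA in xA.
have IH1 := IH G' F1 hG' sF1.
have IH2 := IH G' F2 hG' sF2.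
have cF : #|F| <= #|F1| + #|F2|.
  set Fx := [set A in F | x \in A]. set Fn := [set A in F | x \notin A].
  have eF : #|F| = #|Fx| + #|Fn|.
    by rewrite -(cardsID [set A : {set T} | x \in A] F); congr (_ + _); apply: eq_card => A; rewrite !inE andbC.
  set Im := [set A :\ x | A in Fx].
  have cIm : #|Im| = #|Fx|.
    apply: card_in_imset => A B; rewrite !inE => /andP [_ xA] /andP [_ xB] e.
    by rewrite -(finset.setD1K xA) -(finset.setD1K xB) e.
  have s1 : Fn :|: Im \subset F1.
    apply/fintype.subsetP=> A; rewrite !inE => /orP [/andP [AF xA]|/imsetP [B BF ->]].
      apply/imsetP; exists A => //; apply/setP=> y; rewrite !inE; case: eqP => // ->; by rewrite (negbTE xA).
    by apply/imsetP; exists B => //; move: BF; rewrite inE => /andP [].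
  have s2 : Fn :&: Im \subset F2.
    apply/fintype.subsetP=> A; rewrite !inE => /andP [/andP [AF xA] /imsetP [B BF eA]].
    rewrite AF xA /=; move: BF; rewrite inE => /andP [BF xB].
    by rewrite eA finset.setD1K.
  move: (cardsUI Fn Im); rewrite cIm => hUI.
  move: (subset_leq_card s1) (subset_leq_card s2) => h1 h2.
  by rewrite eF addnC -hUI; exact: leq_add.
set SF := [set K : {set T} | (K \subset G) && shat F K].
set S1 := [set K : {set T} | (K \subset G') && shat F1 K].
set S2 := [set K : {set T} | (K \subset G') && shat F2 K].
have a1 : S1 \subset [set K : {set T} in SF | x \notin K].
  apply/fintype.subsetP=> K; rewrite !inE => /andP [sK /shatP sh].
  have xK : x \notin K by apply/negP=> xK; have := fintype.subsetP sK x xK; rewrite !inE eqxx.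
  rewrite xK andbT (fintype.subset_trans sK (subsetDl _ _)) /=.
  apply/shatP=> B sB; have [A1 /imsetP [A AF ->] e] := sh B sB; exists A => //.
  rewrite -e; apply/setP=> y; rewrite !inE; case: (y =P x) => [->|] //=.
  by rewrite (negbTE xK) !andbF.
have a2 : [set x |: K | K in S2] \subset [set K : {set T} in SF | x \in K].
  apply/fintype.subsetP=> K' /imsetP [K]; rewrite !inE => /andP [sK /shatP sh] ->.
  have xK : x \notin K by apply/negP=> xK; have := fintype.subsetP sK x xK; rewrite !inE eqxx.
  rewrite setU11 andbT finset.subUset finset.sub1set xG (fintype.subset_trans sK (subsetDl _ _)) /=.
  apply/shatP=> B sB.
  have sB' : B :\ x \subset K.
    apply/fintype.subsetP=> y; rewrite !inE => /andP [nyx yB]; move: (fintype.subsetP sB y yB); rewrite !inE (negbTE nyx) //.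
  have [A AF2 e] := sh _ sB'; move: AF2; rewrite inE => /andP [AF /andP [xA xAF]].
  case xB: (x \in B).
    exists (x |: A) => //; rewrite -(finset.setD1K xB) -e; apply/setP=> y; rewrite !inE.
    by case: (y =P x).
  exists A => //; apply/setP=> y; move/setP: e => /(_ y); rewrite !inE.
  case: (y =P x) => [->|_] /=; last by [].
  by rewrite (negbTE xA) xB.
have inj2 : #|[set x |: K | K in S2]| = #|S2|.
  apply: card_in_imset => K1 K2; rewrite !inE => /andP [s1 _] /andP [s2 _] e.
  have nK : forall K : {set T}, K \subset G' -> x \notin K.
    by move=> K sK; apply/negP=> xK; have := fintype.subsetP sK x xK; rewrite !inE eqxx.
  by rewrite -(setU1K (nK _ s1)) -(setU1K (nK _ s2)) e.
have eSF : #|SF| = #|[set K : {set T} in SF | x \in K]| + #|[set K : {set T} in SF | x \notin K]|.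
  by rewrite -(cardsID [set K : {set T} | x \in K] SF); congr (_ + _); apply: eq_card => A; rewrite !inE andbC.
move: (subset_leq_card a1) (subset_leq_card a2); rewrite inj2 => h1 h2.
apply: (leq_trans cF); apply: (leq_trans (leq_add IH1 IH2)).
by rewrite eSF addnC; exact: leq_add.
Qed.

End Pajor.

Lemma expn_pow m n : m ^ n = Nat.pow m n.
Proof. by elim: n => [|n IH] //; rewrite expnS IH. Qed.
Lemma Zgen a b c e1 e2 e3 :
  BinInt.Z.lt (BinInt.Z.mul (BinInt.Z.pow (BinInt.Z.of_nat a) (BinInt.Z.of_nat e1))
                  (BinInt.Z.pow (BinInt.Z.of_nat b) (BinInt.Z.of_nat e2)))
     (BinInt.Z.pow (BinInt.Z.of_nat c) (BinInt.Z.of_nat e3)) ->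
  a ^ e1 * b ^ e2 < c ^ e3.
Proof.
move=> h; apply/ssrnat.ltP; apply (proj2 (Znat.Nat2Z.inj_lt _ _)).
by rewrite Znat.Nat2Z.inj_mul !expn_pow !Znat.Nat2Z.inj_pow.
Qed.
Lemma base_ineq : 64 ^ 100 * 81 ^ 941 < 128 ^ 941.
Proof.
apply (@Zgen 64 81 128 100 941 941).
vm_compute. reflexivity.
Qed.

Lemma card_small (T : finType) d :
  #|[set K : {set T} | #|K| <= d]| <= \sum_(k < d.+1) 'C(#|T|, k).
Proof.
elim: d => [|d IH].
  rewrite big_ord_recl big_ord0 addn0 -card_draws; apply: subset_leq_card.
  by apply/fintype.subsetP=> K; rewrite !inE leqn0.
rewrite big_ord_recr /= -card_draws.
have s : [set K : {set T} | #|K| <= d.+1] \subset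
   [set K : {set T} | #|K| <= d] :|: [set K : {set T} | #|K| == d.+1].
  by apply/fintype.subsetP=> K; rewrite !inE leq_eqVlt ltnS orbC.
apply: (leq_trans (subset_leq_card s)).
set A := [set K : {set T} | #|K| <= d]; set B := [set K : {set T} | #|K| == d.+1].
apply: (@leq_trans (#|A| + #|B|)); last exact: leq_add IH (leqnn _).
by rewrite -cardsUI; exact: leq_addr.
Qed.

Lemma phi_bound n d : (\sum_(k < d.+1) 'C(n, k)) * 8 ^ n <= 8 ^ d * 9 ^ n.
Proof.
rewrite big_distrl /=.
pose g k := 'C(n, k) * 8 ^ (n - k).
apply: (@leq_trans (\sum_(k < d.+1) 8 ^ d * g k)).
  apply: leq_sum => k _; rewrite /g.
  case: (ssrnat.leqP k n) => kn; last by rewrite bin_small.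
  rewrite mulnCA leq_mul2l -expnD; apply/orP; right; apply: leq_pexp2l => //.
  have := ltn_ord k; lia.
rewrite -big_distrr /= leq_mul2l; apply/orP; right.
have -> : 9 ^ n = \sum_(k < n.+1) g k.
  by rewrite (expnDn 8 1); apply: eq_bigr => i _; rewrite exp1n muln1.
rewrite -(big_mkord xpredT g) -(big_mkord xpredT g).
rewrite (@big_cat_nat _ _ _ (minn d.+1 n.+1) 0 d.+1 _ _ (leq0n _) (geq_minl _ _)) /=.
rewrite [X in _ <= X](@big_cat_nat _ _ _ (minn d.+1 n.+1) 0 n.+1 _ _ (leq0n _) (geq_minr _ _)) /=.
apply: leq_add => //.
rewrite [X in X <= _](_ : _ = 0) //.
rewrite big_nat_cond; apply: big1 => i /andP [/andP [h1 h2] _].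
rewrite /g bin_small //; move: h1; rewrite geq_min => /orP [] h //.
by move: (leq_trans h h2); rewrite ltnn.
Qed.

Lemma abs_contra X Y a b d m : X < Y -> a < b -> 0 < m ->
  Y ^ d * b ^ m <= X ^ d * a ^ m -> False.
Proof.
move=> hXY hab hm h.
have h1 : X ^ d * a ^ m <= Y ^ d * a ^ m.
  rewrite leq_mul2r; apply/orP; right; case: d {h} => [|d] //; rewrite leq_exp2r //; exact: ltnW.
have h2 : Y ^ d * a ^ m < Y ^ d * b ^ m.
  rewrite ltn_mul2l expn_gt0 ltn_exp2r // hab andbT (leq_ltn_trans (leq0n X) hXY) //.
by move: (leq_ltn_trans (leq_trans h h1) h2); rewrite ltnn.
Qed.

Lemma abs2 c a b e1 e2 d m : a ^ e1 * b ^ e2 < c ^ e2 -> b < c -> 0 < m ->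
  c ^ (e2 * d + m) <= a ^ (e1 * d) * b ^ (e2 * d + m) -> False.
Proof.
move=> h1 h2 h3; rewrite !expnD !expnM mulnA -expnMn; exact: abs_contra.
Qed.

Lemma final_arith n d : 941 * d < 100 * n ->
  2 ^ n <= (\sum_(k < d.+1) 'C(n, k)) ^ 2 -> False.
Proof.
set P := \sum_(k < d.+1) _ => hnd h2.
have hb := phi_bound n d; rewrite -/P in hb.
have h3 : 128 ^ n <= 64 ^ d * 81 ^ n.
  have e8 : forall k, (8 ^ k) ^ 2 = 64 ^ k by move=> k; rewrite -expnM mulnC expnM.
  have e9 : forall k, (9 ^ k) ^ 2 = 81 ^ k by move=> k; rewrite -expnM mulnC expnM.
  have : (P * 8 ^ n) ^ 2 <= (8 ^ d * 9 ^ n) ^ 2 by rewrite leq_sqr.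
  rewrite !expnMn !e8 e9 => h.
  have e1 : 128 ^ n = 2 ^ n * 64 ^ n by rewrite -expnMn.
  rewrite e1; apply: leq_trans h; exact: leq_mul.
have h4 : (128 ^ n) ^ 100 <= (64 ^ d * 81 ^ n) ^ 100 by rewrite leq_exp2r.
rewrite expnMn -!expnM in h4.
set m := 100 * n - 941 * d.
have em : n * 100 = 941 * d + m by rewrite mulnC subnKC // ltnW.
have m0 : 0 < m by rewrite subn_gt0.
rewrite em (mulnC d 100) in h4.
exact: (abs2 base_ineq (isT : 81 < 128) m0 h4).
Qed.

End CombArith.

Lemma InP (T : eqType) (x : T) (s : seq T) : List.In x s <-> x \in s.
Proof.
elim: s => [|y s IH] //=; rewrite in_cons; split.
- by case=> [->|/IH ->]; rewrite ?eqxx ?orbT.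
- by case/orP => [/eqP ->|/IH]; [left|right].
Qed.

Lemma uniq_NoDup (T : eqType) (s : seq T) : uniq s -> List.NoDup s.
Proof.
elim: s => [|y s IH] /=; first by constructor.
by case/andP => ys us; constructor; [move/InP; apply/negP|exact: IH].
Qed.

Lemma NoDup_map_in (A B : Type) (f : A -> B) (l : list A) :
  (forall x y, List.In x l -> List.In y l -> f x = f y -> x = y) ->
  List.NoDup l -> List.NoDup (map f l).
Proof.
elim: l => [|y l IH] /= hinj hnd; first by constructor.
inversion hnd; subst; constructor; last first.
  by apply: IH => // x z hx hz; apply: hinj; right.
move/List.in_map_iff => [x [fx xl]].
have exy : x = y by apply: hinj; [right|left|].
by subst x.
Qed.

Lemma length_size (A : Type) (s : list A) : List.length s = size s.
Proof. by elim: s => //= x s ->. Qed.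

Section Fam.
Local Close Scope classical_set_scope.
Context (R : realType) (W : Type) (Theta : set (W -> R)) (V : R).
Hypothesis hV : VC_subgraph_le Theta V.

Lemma threshold (J : finType) (v : J -> R) (ph : R -> Prop) :
  (forall x y, x <= y -> ph x -> ph y) ->
  exists a : R, forall j, (a < v j) <-> ph (v j).
Proof.
move=> mono.
pose lo := \big[Order.min/0]_(j : J) v j - 1.
have hlo : forall j, lo < v j.
  move=> j; rewrite /lo ltrBlDr; apply: (le_lt_trans (bigmin_le 0 j v)).
  by rewrite ltrDl ltr01.
exists (\big[Order.max/lo]_(j | ~~ `[< ph (v j) >]) v j) => j; split.
- move=> h; apply: contrapT => nph.
  have : v j <= \big[Order.max/lo]_(j | ~~ `[< ph (v j) >]) v j.
    by apply: le_bigmax_cond; apply/negP => /asboolP.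
  by rewrite leNgt h.
- move=> pj; apply/bigmax_ltP; split => // k nk.
  rewrite ltNge; apply/negP => hk; move/negP: nk; apply; apply/asboolP.
  exact: mono hk pj.
Qed.

Definition patf n (w : 'I_n -> W) (phi : 'I_n -> R -> Prop) (th : W -> R)
  : {set 'I_n} := [set i | `[< phi i (th (w i)) >]].
Definition famf n (w : 'I_n -> W) (phi : 'I_n -> R -> Prop) : {set {set 'I_n}} :=
  [set X | `[< exists2 th, Theta th & X = patf w phi th >]].

Lemma fam_bound (n d : nat) (hd : forall m : nat, (d < m)%N -> V < m%:R)
  (w : 'I_n -> W) (phi : 'I_n -> R -> Prop)
  (mono : forall i x y, x <= y -> phi i x -> phi i y) :
  (#|famf w phi| <= \sum_(k < d.+1) 'C(n, k))%N.
Proof.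
have h := @pajor _ n [set: 'I_n] (famf w phi).
have := h _ (fun A _ => finset.subsetT A); rewrite cardsT card_ord => /(_ (leqnn _)) h1.
apply: (leq_trans h1); have hs := card_small 'I_n d; rewrite card_ord in hs; apply: leq_trans hs.
apply: subset_leq_card; apply/fintype.subsetP => K; rewrite !inE => /andP [_ /shatP sh].
rewrite leqNgt; apply/negP => hK; have VK := hd _ hK.
have : forall B : {set 'I_n}, exists th, Theta th /\ patf w phi th :&: K = B :&: K.
  move=> B; have [A AF e] := sh (B :&: K) (subsetIr _ _).
  move: AF; rewrite inE => /asboolP [th th1 eA]; exists th; split => //.
  by rewrite -eA e.
case/choice => tf htf.
have : forall i, exists a, forall B, (a < tf B (w i)) <-> phi i (tf B (w i)).
  move=> i; exact: (threshold (fun B => tf B (w i)) (mono i)).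
case/choice => a ha.
pose L := [seq (w i, a i) | i <- enum K].
apply: (hV (P := L)).
- apply: NoDup_map_in; last exact: uniq_NoDup (enum_uniq K).
  move=> i j /InP; rewrite mem_enum => iK /InP; rewrite mem_enum => jK [ewij eaij].
  have [_ e1] := htf [set i].
  have : i \in patf w phi (tf [set i]) :&: K by rewrite e1 !inE eqxx iK.
  rewrite !inE iK andbT => /asboolP /(ha i [set i]).2.
  rewrite ewij eaij => /(ha j [set i]).1 pj.
  have : j \in patf w phi (tf [set i]) :&: K by rewrite !inE jK andbT; apply/asboolP.
  by rewrite e1 !inE => /andP [/eqP -> _].
- by rewrite length_size size_map -cardE.
- move=> Bs; pose B := [set i in K | `[< Bs (w i, a i) >]].
  exists (subgraph (tf B)); split; first by exists (tf B) => //; exact: (htf B).1.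
  move=> x /List.in_map_iff [i [<- /InP]]; rewrite mem_enum => iK.
  rewrite /subgraph /= (ha i B); have e := (htf B).2.
  split => hh.
    have : i \in patf w phi (tf B) :&: K by rewrite !inE iK andbT; apply/asboolP.
    by rewrite e !inE iK /= andbT => /asboolP.
  have : i \in B :&: K by rewrite !inE iK /= andbT; apply/asboolP.
  by rewrite -e !inE => /andP [/asboolP].
Qed.

End Fam.

Lemma pw (R : realType) (s a z1 z2 x l : R) : 0 <= l <= 1 -> x = l * z1 + (1 - l) * z2 ->
  expR (x * a) <= l * expR (s * (x - z1)) * expR (z1 * a) + (1 - l) * expR (s * (x - z2)) * expR (z2 * a).
Proof.
move=> /andP [l0 l1] hx.
have e1 : expR (s * (x - z1)) * expR (z1 * a) = expR (x * a) * expR ((z1 - x) * (a - s)).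
  by rewrite -!expRD; congr expR; ring.
have e2 : expR (s * (x - z2)) * expR (z2 * a) = expR (x * a) * expR ((z2 - x) * (a - s)).
  by rewrite -!expRD; congr expR; ring.
rewrite -!mulrA e1 e2.
have -> : l * (expR (x * a) * expR ((z1 - x) * (a - s))) + (1 - l) * (expR (x * a) * expR ((z2 - x) * (a - s)))
  = expR (x * a) * (l * expR ((z1 - x) * (a - s)) + (1 - l) * expR ((z2 - x) * (a - s))) by ring.
rewrite -[X in X <= _]mulr1; apply: ler_wpM2l; first exact: ltW (expR_gt0 _).
have h1 := expR_ge1Dx ((z1 - x) * (a - s)).
have h2 := expR_ge1Dx ((z2 - x) * (a - s)).
have k1 := ler_wpM2l l0 h1.
have k2 : (1 - l) * (1 + (z2 - x) * (a - s)) <= (1 - l) * expR ((z2 - x) * (a - s)).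
  by apply: ler_wpM2l => //; rewrite subr_ge0.
have key : l * (1 + (z1 - x) * (a - s)) + (1 - l) * (1 + (z2 - x) * (a - s)) = 1.
  by rewrite hx; ring.
lra.
Qed.

Section An.
Context (R : realType) (d : measure_display) (Y : measurableType d)
  (nu : {measure set Y -> \bar R}) (S : Y -> R) (mS : measurable_fun setT S).

Definition Zf (th : R) := (\int[nu]_y ((expR (th * S y))%:E))%E.

Lemma mexpS (th : R) : measurable_fun setT (fun y => expR (th * S y)).
Proof.
apply: measurableT_comp; first exact: measurable_expR.
by apply: measurable_funM => //; exact: measurable_cst.
Qed.

Lemma mexpSE (th : R) : measurable_fun setT (fun y => (expR (th * S y))%:E).
Proof. by apply/measurable_EFinP; exact: mexpS. Qed.

Lemma Zpos (hS : ~ exists c, {ae nu, forall y, S y = c}) th :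
  (Zf th < +oo)%E -> 0 < fine (Zf th).
Proof.
move=> hZ; apply: fine_gt0; rewrite hZ andbT lt0e integral_ge0 ?andbT; last first.
  by move=> y _; rewrite lee_fin expR_ge0.
apply/eqP => Z0; apply: hS; exists 0.
have hab : (\int[nu]_y `|(expR (th * S y))%:E| = 0)%E.
  by rewrite -Z0; apply: eq_integral => y _; rewrite gee0_abs // lee_fin expR_ge0.
have hae := (ae_eq_integral_abs nu measurableT (mexpSE th)).1 hab.
apply: filterS hae => y /(_ I) /= h.
by move: h => /eqP; rewrite eqe (gt_eqF (expR_gt0 _)).
Qed.


Lemma Jconv (I : set R) (hI : is_interval I)
  (hfin : forall th, I th -> (Zf th < +oo)%E)
  (s t z1 z2 x : R) : I z1 -> I z2 -> z1 <= x <= z2 -> 0 < t ->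
  t * fine (Zf z1) < expR (s * z1) -> t * fine (Zf z2) < expR (s * z2) ->
  t * fine (Zf x) < expR (s * x).
Proof.
move=> I1 I2 hx12 t0 j1 j2.
have [->|ne1] := eqVneq x z1; first done.
have [->|ne2] := eqVneq x z2; first done.
move: hx12 => /andP [h1 h2].
have lt1 : z1 < x by rewrite lt_neqAle eq_sym ne1 h1.
have lt2 : x < z2 by rewrite lt_neqAle ne2 h2.
have Ix : I x by apply: (hI z1 z2) => //; rewrite h1 h2.
have zpos : 0 < z2 - z1 by rewrite subr_gt0 (lt_trans lt1 lt2).
set l := (z2 - x) / (z2 - z1).
have l0 : 0 < l by rewrite divr_gt0 // subr_gt0.
have l1 : l < 1 by rewrite ltr_pdivrMr // mul1r; lra.
have hx : x = l * z1 + (1 - l) * z2.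
  rewrite /l; field; lra.
set c1 := l * expR (s * (x - z1)).
set c2 := (1 - l) * expR (s * (x - z2)).
have c10 : 0 < c1 by rewrite mulr_gt0 // expR_gt0.
have c20 : 0 < c2 by rewrite mulr_gt0 ?expR_gt0 // subr_gt0.
have hpw : forall y, expR (x * S y) <= c1 * expR (z1 * S y) + c2 * expR (z2 * S y).
  by move=> y; apply: pw => //; rewrite (ltW l0) (ltW l1).
have mf1 := mexpS z1. have mf2 := mexpS z2.
have hint : (Zf x <= c1%:E * Zf z1 + c2%:E * Zf z2)%E.
  apply: (@le_trans _ _ (\int[nu]_y ((c1 * expR (z1 * S y))%:E + (c2 * expR (z2 * S y))%:E))%E).
    apply: ge0_le_integral => //.
    - exact: mexpSE.
    - apply: emeasurable_funD; apply/measurable_EFinP; apply: measurable_funM => //; exact: measurable_cst.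
    - by move=> y _; rewrite -EFinD lee_fin.
  rewrite ge0_integralD //.
  - rewrite (_ : (fun y => (c1 * expR (z1 * S y))%:E) = (fun y => (c1%:E * (expR (z1 * S y))%:E)%E)); last first.
      by apply: funext => y; rewrite EFinM.
    rewrite (_ : (fun y => (c2 * expR (z2 * S y))%:E) = (fun y => (c2%:E * (expR (z2 * S y))%:E)%E)); last first.
      by apply: funext => y; rewrite EFinM.
    have f0 : forall th, (forall y, [set: Y] y -> (0 <= (expR (th * S y))%:E)%E).
      by move=> th y _; rewrite lee_fin expR_ge0.
    rewrite (@ge0_integralZl_EFin _ _ _ nu setT measurableT (fun y => (expR (z1 * S y))%:E) (f0 z1) (mexpSE z1) c1 (ltW c10)).
    by rewrite (@ge0_integralZl_EFin _ _ _ nu setT measurableT (fun y => (expR (z2 * S y))%:E) (f0 z2) (mexpSE z2) c2 (ltW c20)).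
  - by move=> y _; rewrite lee_fin mulr_ge0 // ?expR_ge0 // ltW.
  - by apply/measurable_EFinP; apply: measurable_funM => //; exact: measurable_cst.
  - by move=> y _; rewrite lee_fin mulr_ge0 // ?expR_ge0 // ltW.
  - by apply/measurable_EFinP; apply: measurable_funM => //; exact: measurable_cst.
have finZ : forall th, I th -> (fine (Zf th))%:E = Zf th.
  move=> th Ith; apply: fineK; rewrite ge0_fin_numE ?hfin //.
  by apply: integral_ge0 => y _; rewrite lee_fin expR_ge0.
move: hint; rewrite -(finZ x Ix) -(finZ z1 I1) -(finZ z2 I2) -!EFinM -EFinD lee_fin => hint.
have e1 : c1 * expR (s * z1) = l * expR (s * x).
  by rewrite /c1 -mulrA -expRD; congr (_ * expR _); ring.
have e2 : c2 * expR (s * z2) = (1 - l) * expR (s * x).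
  by rewrite /c2 -mulrA -expRD; congr (_ * expR _); ring.
have k0 : t * fine (Zf x) <= t * (c1 * fine (Zf z1) + c2 * fine (Zf z2)) by rewrite ler_wpM2l // ltW.
have k1 : c1 * (t * fine (Zf z1)) < c1 * expR (s * z1) by rewrite ltr_pM2l.
have k2 : c2 * (t * fine (Zf z2)) < c2 * expR (s * z2) by rewrite ltr_pM2l.
rewrite e1 in k1; rewrite e2 in k2.
have ee : t * (c1 * fine (Zf z1) + c2 * fine (Zf z2)) = c1 * (t * fine (Zf z1)) + c2 * (t * fine (Zf z2)) by ring.
lra.
Qed.

End An.

Section Count2.
Local Close Scope classical_set_scope.
Local Close Scope ring_scope.
Local Open Scope nat_scope.

Lemma count2 (n : nat) (F1 F2 : {set {set 'I_n}})
  (h : forall X : {set 'I_n}, exists2 A, A \in F1 & exists2 B, B \in F2 & X = A :&: ~: B) :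
  2 ^ n <= #|F1| * #|F2|.
Proof.
have e : #|[set: {set 'I_n}]| = 2 ^ n by rewrite -powersetT card_powerset cardsT card_ord.
rewrite -e -cardsX.
apply: (leq_trans _ (leq_imset_card (fun p : {set 'I_n} * {set 'I_n} => p.1 :&: ~: p.2) _)).
apply: subset_leq_card; apply/fintype.subsetP => X _.
have [A A1 [B B2 ->]] := h X.
by apply/imsetP; exists (A, B) => //; rewrite !inE A1 B2.
Qed.
End Count2.

Unset Implicit Arguments.

Theorem proposition6 (R : realType) (d : measure_display) (Y : measurableType d)
    (nu : {measure set Y -> \bar R}) (S : Y -> R) (I : set R)
    (W : Type) (Theta : set (W -> R)) (V : R) :
  sigma_finite setT nu ->
  measurable_fun setT S ->
  ~ (exists c : R, {ae nu, forall y, S y = c}) ->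
  is_interval I ->
  (exists t : R, (@interior R I) t) ->
  (forall theta, I theta ->
     (\int[nu]_y ((expR (theta * S y))%:E) < +oo)%E) ->
  (forall th, Theta th -> forall w, I (th w)) ->
  VC_subgraph_le Theta V ->
  1 <= V ->
  VC_subgraph_le
    [set (fun p : W * Y => qdens nu S (th p.1) p.2) | th in Theta]
    ((941%:R / 100%:R) * V).
Proof.
move=> _ mS hS hI _ hfin hTh hV hV1 P nd hlen sh.
set n := List.length P in hlen.
have n0 : (0 < n)%N.
  rewrite lt0n; apply/negP => /eqP n0; move: hlen; rewrite n0 ltNge => /negP; apply.
  exact: mulr_ge0 (divr_ge0 (ler0n _ _) (ler0n _ _)) (le_trans ler01 hV1).
case EP: P => [|p0 P0]; first by move: n0; rewrite /n EP.
pose dd := Num.truncn V.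
have hd : forall m : nat, (dd < m)%N -> V < m%:R.
  by move=> m hm; apply: (lt_le_trans (truncnS_gt V)); rewrite ler_nat.
have hdn : (941 * dd < 100 * n)%N.
  have h1 : dd%:R <= V by rewrite truncn_le (le_trans ler01 hV1).
  rewrite -(ltr_nat R) !natrM.
  apply: (le_lt_trans (ler_wpM2l (ler0n _ 941) h1)).
  have e : 100%:R * (941%:R / 100%:R) = 941%:R :> R by rewrite mulrCA divff ?mulr1 // pnatr_eq0.
  by rewrite -e -mulrA ltr_pM2l.
pose pt (i : 'I_n) := List.nth (nat_of_ord i) P p0.
pose w (i : 'I_n) := (pt i).1.1.
pose yy (i : 'I_n) := (pt i).1.2.
pose t (i : 'I_n) := (pt i).2.
have ptIn : forall i : 'I_n, List.In (pt i) P.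
  by move=> i; apply: List.nth_In; apply/ssrnat.ltP; exact: ltn_ord.
have ptinj : forall i j : 'I_n, pt i = pt j -> i = j.
  move=> i j e; apply: val_inj => /=.
  by apply: ((List.NoDup_nth P p0).1 nd) => //; apply/ssrnat.ltP; exact: ltn_ord.
have hsh : forall X : {set 'I_n}, exists2 th, Theta th &
    forall i, (i \in X) <-> t i < qdens nu S (th (w i)) (yy i).
  move=> X.
  have [c [[f [th Th eth] ec] hc]] := sh (fun p => exists2 i : 'I_n, i \in X & p = pt i).
  exists th => // i; have := hc (pt i) (ptIn i); rewrite -ec -eth /subgraph /= => hci.
  split => [iX|hq]; first by apply/hci; exists i.
  by case: (hci.1 hq) => j jX /ptinj ->.
have tpos : forall i, 0 < t i.
  move=> i; have [th _ h] := hsh finset.set0; rewrite ltNge; apply/negP => ti.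
  by have := (h i).2 (le_lt_trans ti (expR_gt0 _)); rewrite inE.
have hq : forall i th, I th ->
    (t i < qdens nu S th (yy i) <-> t i * fine (Zf nu S th) < expR (S (yy i) * th)).
  move=> i th Ith; have zp := Zpos mS hS (hfin th Ith).
  have hz : fine (Zf nu S th) \is Num.pos by rewrite posrE.
  have e : qdens nu S th (yy i) = expR (S (yy i) * th) / fine (Zf nu S th).
    by rewrite /qdens expRB (lnK hz).
  by rewrite e ltr_pdivlMr.
pose J (i : 'I_n) (z : R) := I z /\ t i * fine (Zf nu S z) < expR (S (yy i) * z).
pose phi (i : 'I_n) (x : R) := exists z, J i z /\ z <= x.
pose chi (i : 'I_n) (x : R) := ~ exists z, J i z /\ x <= z.
have mphi : forall i x y, x <= y -> phi i x -> phi i y.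
  by move=> i x y xy [z [Jz zx]]; exists z; split => //; exact: le_trans zx xy.
have mchi : forall i x y, x <= y -> chi i x -> chi i y.
  by move=> i x y xy cx [z [Jz yz]]; apply: cx; exists z; split => //; exact: le_trans xy yz.
have hpat : forall th, Theta th -> forall i,
    (t i < qdens nu S (th (w i)) (yy i)) <-> (phi i (th (w i)) /\ ~ chi i (th (w i))).
  move=> th Th i; rewrite (hq i _ (hTh th Th (w i))); split.
  - move=> h; have Jt : J i (th (w i)) by split => //; exact: hTh.
    split; first by exists (th (w i)); split.
    by move=> hc; apply: hc; exists (th (w i)); split.
  - case => [[z1 [[I1 J1] le1]] /contrapT [z2 [[I2 J2] le2]]].
    by apply: (Jconv mS hI hfin I1 I2 _ (tpos i) J1 J2); rewrite le1 le2.
have c2 := @count2 n (famf Theta w phi) (famf Theta w chi).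
have b1 := fam_bound hV hd w mphi.
have b2 := fam_bound hV hd w mchi.
apply: (final_arith hdn).
apply: (leq_trans (c2 _)); last first.
  by rewrite expnS expn1; exact: leq_mul.
move=> X; have [th Th hX] := hsh X.
exists (patf w phi th); first by rewrite inE; apply/asboolP; exists th.
exists (patf w chi th); first by rewrite inE; apply/asboolP; exists th.
apply/setP => i; rewrite !inE; apply/idP/andP.
- move=> iX; have [p nc] := (hpat th Th i).1 ((hX i).1 iX).
  by split; [exact/asboolP|exact/asboolPn].
- by case=> [/asboolP p /asboolPn nc]; apply/(hX i).2/(hpat th Th i).2.
Qed.
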